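(* Let $k\ge9$ and let $\boldsymbol\xi\in[P_{k-1}(\boldsymbol K)]^3$ be such that all the vertex functionals, the edge moments $(\boldsymbol\xi\cdot\boldsymbol t,1)_{\boldsymbol e}$, and the edge functionals (1.a)–(1.f) of the space $\mathbf N^{\operatorname{curl}}_{k-1}$ (listed in the context) vanish on $\boldsymbol\xi$. Then $\boldsymbol\xi$, $\nabla\boldsymbol\xi$ and $\nabla(\operatorname{curl}\boldsymbol\xi)$ vanish on every edge of $\boldsymbol K$.
   Context: $\boldsymbol K$ is a tetrahedron, $P_m$ denotes polynomials of degree $\le m$. For an edge $\boldsymbol e$ with endpoints having barycentric coordinates $\lambda_0,\lambda_1$ (restricted to $\boldsymbol e$), let $\boldsymbol t$ be its unit tangent and $\boldsymbol n_1,\boldsymbol n_2$ orthonormal unit normals with $\boldsymbol n_1\perp\boldsymbol n_2$. For a space $W$ of functions on $\boldsymbol e$, $W/\mathbb R$ denotes its subspace of zero-mean functions. $\langle\!\langle u,v\rangle\!\rangle_{0,\boldsymbol e}=(\partial u/\partial\boldsymbol t,\partial v/\partial\boldsymbol t)_{\boldsymbol e}$. Functionals of $\mathbf N^{\operatorname{curl}}_{k-1}$ on $\boldsymbol\xi\in[P_{k-1}(\boldsymbol K)]^3$: vertex functionals: all partial derivatives $D^\alpha\boldsymbol\xi(\boldsymbol x)$, $0\le|\alpha|\le3$, at each vertex $\boldsymbol x$; edge moments $(\boldsymbol\xi\cdot\boldsymbol t,1)_{\boldsymbol e}$ for each edge; on each edge $\boldsymbol e$: (1.a) $(\boldsymbol\xi\cdot\boldsymbol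 t,b)_{\boldsymbol e}$, $b\in(\lambda_0\lambda_1)^4P_{k-9}(\boldsymbol e)/\mathbb R$; (1.b) $\langle\!\langle\boldsymbol\xi\cdot\boldsymbol n_j,b\rangle\!\rangle_{0,\boldsymbol e}$, $b\in(\lambda_0\lambda_1)^4P_{k-9}(\boldsymbol e)$, $j=1,2$; (1.c) $(\partial(\boldsymbol\xi\cdot\boldsymbol t)/\partial\boldsymbol n_j,b)_{\boldsymbol e}$, $b\in(\lambda_0\lambda_1)^3P_{k-8}(\boldsymbol e)$, $j=1,2$; (1.d) $(\partial(\boldsymbol\xi\cdot\boldsymbol n_{j'})/\partial\boldsymbol n_j,b)_{\boldsymbol e}$, $b\in(\lambda_0\lambda_1)^3P_{k-8}(\boldsymbol e)$, $j,j'=1,2$; (1.e) $(\partial(\operatorname{curl}\boldsymbol\xi)/\partial\boldsymbol n_1,\boldsymbol b)_{\boldsymbol e}$, $\boldsymbol b\in[(\lambda_0\lambda_1)^2P_{k-7}(\boldsymbol e)]^3$; (1.f) $((I-\boldsymbol n_2\otimes\boldsymbol n_2)\,\partial(\operatorname{curl}\boldsymbol\xi)/\partial\boldsymbol n_2,\boldsymbol b)_{\boldsymbol e}$, $\boldsymbol b\in[(\lambda_0\lambda_1)^2P_{k-7}(\boldsymbol e)]^3$. *)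

(* Defs.v *)
From HB Require Import structures.
From mathcomp Require Import all_boot all_order all_algebra.
From mathcomp Require Import mpoly.
Set Implicit Arguments. Unset Strict Implicit. Unset Printing Implicit Defensive.
Import Order.TTheory GRing.Theory Num.Theory.
Local Open Scope ring_scope.

Section FEM.
Variable R : rcfType.

Definition vec := 'I_3 -> R.
Definition vfield := 'I_3 -> {mpoly R[3]}.

Definition dot (u w : vec) : R := \sum_(i < 3) u i * w i.
Definition vnorm (u : vec) : R := Num.sqrt (dot u u).

Definition dderiv (d : vec) (p : {mpoly R[3]}) : {mpoly R[3]} :=
  \sum_(i < 3) d i *: p^`M(i).

Definition dotp (d : vec) (xi : vfield) : {mpoly R[3]} :=
  \sum_(i < 3) d i *: xi i.

Definition i0 : 'I_3 := @Ordinal 3 0 isT.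
Definition i1 : 'I_3 := @Ordinal 3 1 isT.
Definition i2 : 'I_3 := @Ordinal 3 2 isT.

Definition curl (xi : vfield) : vfield := fun i =>
  match nat_of_ord i with
  | 0 => (xi i2)^`M(i1) - (xi i1)^`M(i2)
  | 1 => (xi i0)^`M(i2) - (xi i2)^`M(i0)
  | _ => (xi i1)^`M(i0) - (xi i0)^`M(i1)
  end.

(* restriction of p to the edge [a,b], parametrized by s in [0,1],
   x(s) = a + s (b - a); then lambda_0 = 1 - s and lambda_1 = s on the edge *)
Definition restrict (a b : vec) (p : {mpoly R[3]}) : {poly R} :=
  mmap (@polyC R) (fun i => (a i)%:P + (b i - a i) *: 'X) p.

Definition int01 (q : {poly R}) : R := \sum_(i < size q) q`_i / (i.+1)%:R.

Definition elen (a b : vec) : R := vnorm (fun i => b i - a i).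
Definition tang (a b : vec) : vec := fun i => (b i - a i) / elen a b.

(* L2 inner product on the edge: (f,g)_e = |e| * int_0^1 f(s) g(s) ds *)
Definition eip (a b : vec) (f g : {poly R}) : R := elen a b * int01 (f * g).

(* <<f,g>>_{0,e} = (df/dt, dg/dt)_e, with d/dt = (1/|e|) d/ds on the edge *)
Definition etip (a b : vec) (f g : {poly R}) : R :=
  eip a b ((elen a b)^-1 *: f^`()) ((elen a b)^-1 *: g^`()).

(* (lambda_0 lambda_1)^r q  with lambda_0 = 1 - s, lambda_1 = s *)
Definition bubble (r : nat) (q : {poly R}) : {poly R} :=
  (('X : {poly R}) * (1 - 'X)) ^+ r * q.

(* q in P_m(e) iff size q <= m.+1 *)

Definition nondeg_tet (v : 'I_4 -> vec) : Prop :=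
  \det (\matrix_(r < 3, c < 3) (v (lift ord0 r) c - v ord0 c)) != 0.

End FEM.

(* Main.v *)
Require Import Defs.
From HB Require Import structures.
From mathcomp Require Import all_boot all_order all_algebra.
From mathcomp Require Import mpoly.
From mathcomp Require Import polyrcf.
From mathcomp Require Import zify ring.
Import Order.TTheory GRing.Theory Num.Theory.
Set Implicit Arguments. Unset Strict Implicit. Unset Printing Implicit Defensive.
Local Open Scope ring_scope.

Section Uni.
Variable R : rcfType.
Implicit Types (f g q : {poly R}).

Definition prim q : {poly R} :=
  \poly_(i < (size q).+1) (if i is j.+1 then q`_j / (j.+1)%:R else 0).

Lemma prim_deriv q : (prim q)^`() = q.
Proof.
apply/polyP=> i; rewrite coef_deriv coef_poly ltnS.
case: ltnP => hi.
  apply/eqP; rewrite -(mulr_natr (q`_i / _)) divfK // pnatr_eq0 //.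
by apply/eqP; rewrite mul0rn nth_default.
Qed.

Lemma int01_prim q : int01 q = (prim q).[1] - (prim q).[0].
Proof.
rewrite horner_coef0 coef_poly /= subr0.
rewrite (horner_coef_wide 1 (size_poly _ _)) big_ord_recl /= coef_poly /= mul0r add0r.
rewrite /int01; apply: eq_bigr => i _; rewrite coef_poly /bump /= add1n ltnS ltn_ord.
by rewrite expr1n mulr1.
Qed.

Lemma int01_sq_ge0 g : 0 <= int01 (g * g).
Proof.
rewrite int01_prim subr_ge0.
have H := @ler_hornerW R 0 1 (prim (g * g)).
apply: H; rewrite ?in_itv /= ?ler01 ?lexx //.
by move=> x _; rewrite prim_deriv hornerM -expr2 sqr_ge0.
Qed.

Lemma zero_on01 f : (forall x : R, 0 <= x <= 1 -> f.[x] = 0) -> f = 0.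
Proof.
move=> H; apply/eqP; apply/negPn/negP => nz.
pose rs := mkseq (fun i => ((i.+1)%:R : R)^-1) (size f).
have := @max_poly_roots R f rs nz.
rewrite size_mkseq ltnn => HH; suff: false by []; apply: HH.
  apply/allP => x /mapP [i _ ->]; apply/rootP/H.
  by rewrite invr_ge0 ler0n /= invf_le1 ?ltr0Sn // ler1n.
rewrite map_inj_uniq ?iota_uniq // => i j /invr_inj /eqP.
by rewrite eqr_nat eqSS => /eqP.
Qed.

Lemma int01_sq_eq0 g : int01 (g * g) = 0 -> g = 0.
Proof.
move=> H0; set F := prim (g * g).
have mono := @ler_hornerW R 0 1 F.
have monoF : {in `[0, 1] &, {homo horner F : x y / x <= y}}.
  by apply: mono => y _; rewrite prim_deriv hornerM -expr2 sqr_ge0.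
have E : F.[1] = F.[0] by apply/eqP; rewrite -subr_eq0 -int01_prim H0.
have Z : F - (F.[0])%:P = 0.
  apply: zero_on01 => x /andP [x0 x1].
  rewrite hornerD hornerN hornerC; apply/eqP; rewrite subr_eq0 eq_le.
  have h0 : (0 : R) \in `[0, 1] by rewrite in_itv /= lexx ler01.
  have h1 : (1 : R) \in `[0, 1] by rewrite in_itv /= lexx ler01.
  have hx : x \in `[0, 1] by rewrite in_itv /= x0 x1.
  by rewrite (monoF _ _ h0 hx x0) -E (monoF _ _ hx h1 x1).
have : F^`() = 0 by rewrite (subr0_eq Z) derivC.
by rewrite prim_deriv => /eqP; rewrite mulf_eq0 orbb => /eqP.
Qed.

Lemma derivn_mulXsubC g c n :
  (g * ('X - c%:P))^`(n.+1) = g^`(n) *+ n.+1 + g^`(n.+1) * ('X - c%:P).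
Proof.
elim: n => [|n IH].
  by rewrite derivn1 derivn0 derivM derivXsubC mulr1 mulr1n addrC.
rewrite derivnS IH derivD derivMn derivM derivXsubC mulr1 -!derivnS.
by rewrite [in RHS]mulrSr -addrA [g^`(n.+1) + _]addrC.
Qed.

Lemma mult_root r c f :
  (forall m, (m < r)%N -> (f^`(m)).[c] = 0) -> ('X - c%:P)^+r %| f.
Proof.
elim: r f => [|r IH] f H; first by rewrite expr0 dvd1p.
have /factor_theorem [g Hf] : root f c by apply/rootP; rewrite -(derivn0 f) H.
rewrite Hf in H *.
rewrite exprSr dvdp_mul2r ?polyXsubC_eq0 //; apply: IH => m hm.
have := H m.+1 hm; rewrite derivn_mulXsubC hornerD hornerM hornerXsubC subrr mulr0.
by rewrite addr0 hornerMn => /eqP; rewrite mulrn_eq0 /= => /eqP.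
Qed.

Definition dfac r : {poly R} := ('X - 0%:P)^+r * ('X - 1%:P)^+r.
Definition qfac r f : {poly R} := (-1)^+r *: (f %/ dfac r).

Lemma dfac_neq0 r : dfac r != 0.
Proof. by rewrite mulf_neq0 // expf_neq0 // polyXsubC_eq0. Qed.

Lemma bubble_dfac r q : bubble r q = (-1)^+r *: (dfac r * q).
Proof.
rewrite /bubble /dfac polyC0 polyC1 subr0 -exprMn -opprB mulrN.
by rewrite -mul_polyC rmorphXn /= rmorphN1 mulrA -exprMn mulN1r.
Qed.

Lemma bubble_fac r f :
  (forall m, (m < r)%N -> (f^`(m)).[0] = 0 /\ (f^`(m)).[1] = 0) ->
  f = bubble r (qfac r f) /\ (size (qfac r f) <= size f - r.*2)%N.
Proof.
move=> H.
have hd : dfac r %| f.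
  rewrite /dfac Gauss_dvdp; last first.
    by apply/coprimep_expl/coprimep_expr/coprimep_XsubC2; rewrite subr0 oner_neq0.
  by rewrite !mult_root // => m hm; case: (H m hm).
split.
  rewrite bubble_dfac /qfac -scalerAr scalerA -exprMn mulrNN mulr1 expr1n scale1r.
  by rewrite mulrC divpK.
rewrite size_scale ?signr_eq0 // size_divp ?dfac_neq0 //.
rewrite /dfac size_mul ?expf_neq0 ?polyXsubC_eq0 // !size_exp_XsubC.
by rewrite addSn /= addnS -addnn.
Qed.

Lemma bubble0 r q : (0 < r)%N -> (bubble r q).[0] = 0.
Proof.
by move=> hr; rewrite /bubble hornerM horner_exp hornerM hornerX mul0r expr0n eqn0Ngt hr mul0r.
Qed.

End Uni.
Section Multi.
Variable R : rcfType.
Implicit Types (p q : {mpoly R[3]}) (a b d : vec R).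

Lemma restrictD a b p q : restrict a b (p + q) = restrict a b p + restrict a b q.
Proof. exact: raddfD. Qed.
Lemma restrictB a b p q : restrict a b (p - q) = restrict a b p - restrict a b q.
Proof. exact: raddfB. Qed.
Lemma restrict0 a b : restrict a b 0 = 0.
Proof. exact: raddf0. Qed.
Lemma restrict_sum a b (I : Type) (r : seq I) (P : pred I) (F : I -> {mpoly R[3]}) :
  restrict a b (\sum_(i <- r | P i) F i) = \sum_(i <- r | P i) restrict a b (F i).
Proof. exact: raddf_sum. Qed.
Lemma restrictZ a b c p : restrict a b (c *: p) = c *: restrict a b p.
Proof. by rewrite /restrict mmapZ mul_polyC. Qed.
Lemma restrictM a b p q : restrict a b (p * q) = restrict a b p * restrict a b q.
Proof. exact: rmorphM. Qed.
Lemma restrictC a b c : restrict a b c%:MP = c%:P.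
Proof. by rewrite /restrict mmapC. Qed.
Lemma restrictXi a b i : restrict a b 'X_i = (a i)%:P + (b i - a i) *: 'X.
Proof. by rewrite /restrict mmapX mmap1U. Qed.


Lemma horner_restrict a b p s :
  (restrict a b p).[s] = p.@[fun i => a i + s * (b i - a i)].
Proof.
elim/mpolyind: p => [|c m p _ _ IH].
  by rewrite restrict0 horner0 meval0.
rewrite restrictD hornerD IH mevalD restrictZ hornerZ mevalZ; congr (_ * _ + _).
rewrite /restrict mmapX /mmap1 mevalX horner_prod; apply: eq_bigr => i _.
by rewrite horner_exp hornerD hornerC hornerZ hornerX mulrC.
Qed.

Definition dd d p : {mpoly R[3]} := dderiv d p.

Lemma dderivD d p q : dderiv d (p + q) = dderiv d p + dderiv d q.
Proof. by rewrite /dderiv -big_split; apply: eq_bigr => i _; rewrite mderivD scalerDr. Qed.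
Lemma dderivZ d c p : dderiv d (c *: p) = c *: dderiv d p.
Proof.
rewrite /dderiv scaler_sumr; apply: eq_bigr => i _.
by rewrite mderivZ !scalerA mulrC.
Qed.
Lemma dderivN d p : dderiv d (- p) = - dderiv d p.
Proof. by rewrite -scaleN1r dderivZ scaleN1r. Qed.
Lemma dderivB d p q : dderiv d (p - q) = dderiv d p - dderiv d q.
Proof. by rewrite dderivD dderivN. Qed.
Lemma dderiv0 d : dderiv d 0 = 0.
Proof. by rewrite /dderiv big1 // => i _; rewrite mderiv0 scaler0. Qed.
Lemma dderiv_sum d (I : Type) (r : seq I) (P : pred I) (F : I -> {mpoly R[3]}) :
  dderiv d (\sum_(i <- r | P i) F i) = \sum_(i <- r | P i) dderiv d (F i).
Proof.
elim/big_rec2: _ => [|i x y _ <-]; first by rewrite dderiv0.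
by rewrite dderivD.
Qed.
Lemma dderivC d c : dderiv d c%:MP = 0.
Proof. by rewrite /dderiv big1 // => i _; rewrite mderivC scaler0. Qed.
Lemma dderivM d p q : dderiv d (p * q) = dderiv d p * q + p * dderiv d q.
Proof.
rewrite /dderiv mulr_suml mulr_sumr -big_split; apply: eq_bigr => i _.
by rewrite mderivM scalerDr scalerAl scalerAr.
Qed.
Lemma dderivXi d i : dderiv d 'X_i = d i *: 1.
Proof.
rewrite /dderiv (bigD1 i) //= big1 ?addr0.
  rewrite mderivX mnm1E eqxx /= scale1r (_ : (U_(i) - U_(i) = 0)%MM) ?mpolyX0 //.
  by apply/mnmP => j; rewrite mnmBE subnn mnm0E.
by move=> j hj; rewrite mderivX mnm1E eq_sym (negbTE hj) scale0r scaler0.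
Qed.
Lemma dderiv_lin d d' c p : dderiv (fun i => c * d i + d' i) p = c *: dderiv d p + dderiv d' p.
Proof.
rewrite /dderiv scaler_sumr -big_split; apply: eq_bigr => i _.
by rewrite scalerA scalerDl.
Qed.

Lemma deriv_restrict a b p :
  (restrict a b p)^`() = restrict a b (dderiv (fun i => b i - a i) p).
Proof.
set d := fun i => b i - a i.
pose P q := (restrict a b q)^`() = restrict a b (dderiv d q).
have PD q1 q2 : P q1 -> P q2 -> P (q1 + q2).
  by rewrite /P => h1 h2; rewrite restrictD derivD h1 h2 dderivD restrictD.
have PM q1 q2 : P q1 -> P q2 -> P (q1 * q2).
  rewrite /P => h1 h2; rewrite restrictM derivM h1 h2 dderivM.
  by rewrite restrictD !restrictM.
have PC c : P c%:MP by rewrite /P restrictC derivC dderivC restrict0.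
have P1 : P 1 by rewrite -mpolyC1; apply: PC.
have PX i : P 'X_i.
  rewrite /P restrictXi derivD derivC derivZ derivX add0r dderivXi restrictZ.
  by rewrite -mpolyC1 restrictC.
have PXn q n : P q -> P (q ^+ n).
  by move=> h; elim: n => [|n IH]; [rewrite expr0 | rewrite exprS; exact: (PM _ _ h IH)].
have Pm m : P 'X_[m].
  rewrite mpolyXE_id; apply: (big_ind P); [exact: P1 | | by move=> i _; apply: PXn].
  move=> x y hx hy; exact: PM.
elim/mpolyind: p => [|c m p _ _ IH]; first by rewrite /P restrict0 deriv0 dderiv0 restrict0.
by apply: PD => //; rewrite -mul_mpolyC; apply: PM.
Qed.

Lemma derivn_restrict a b p n :
  (restrict a b p)^`(n) = restrict a b (iter n (dderiv (fun i => b i - a i)) p).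
Proof. by elim: n => [|n IH]; rewrite ?derivn0 // derivnS IH deriv_restrict. Qed.

Lemma size_prod_le (I : Type) (r : seq I) (F : I -> {poly R}) (e : I -> nat) :
  (forall i, (size (F i) <= (e i).+1)%N) ->
  (size (\prod_(i <- r) F i)%R <= (\sum_(i <- r) e i).+1)%N.
Proof.
move=> H; elim: r => [|i r IH]; first by rewrite !big_nil size_poly1.
rewrite !big_cons (leq_trans (size_polyMleq _ _)) //.
move: (H i) IH; set x := size _; set y := size _; lia.
Qed.

Lemma size_exp_le (g : {poly R}) n : (size g <= 2)%N -> (size (g ^+ n) <= n.+1)%N.
Proof.
move=> H; elim: n => [|n IH]; first by rewrite expr0 size_poly1.
rewrite exprS (leq_trans (size_polyMleq _ _)) //.
move: H IH; set x := size _; set y := size _; lia.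
Qed.

Lemma size_restrict a b p : (size (restrict a b p) <= msize p)%N.
Proof.
rewrite /restrict (mmapE (msize p)) // (leq_trans (size_sum _ _ _)) //.
apply/bigmax_leqP => /= m _.
rewrite (leq_trans (size_polyMleq _ _)) //.
have hm := bmdeg m.
have h2 : (size (mmap1 (fun i => (a i)%:P + (b i - a i) *: 'X)%R m) <= (mdeg m).+1)%N.
  rewrite /mmap1 mdegE; apply: size_prod_le => i; apply: size_exp_le.
  rewrite (leq_trans (size_polyD _ _)) // geq_max size_polyC (leq_trans (leq_b1 _)) //=.
  by rewrite (leq_trans (size_scale_leq _ _)) // size_polyX.
rewrite size_polyC; move: h2 hm; set x := size _; set y := mdeg m; set z := mmeasure _ _.
by case: (_ != 0) => /=; lia.
Qed.


Lemma msize_leP p K : (forall m, m \in msupp p -> (mdeg m < K)%N) -> (msize p <= K)%N.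
Proof.
move=> H; rewrite msizeE big_seq; apply: (big_ind (fun x => x <= K)%N) => //.
  by move=> x y hx hy; rewrite geq_max hx hy.
Qed.

Lemma msize_mderiv p i : (msize (p^`M(i)) <= (msize p).-1)%N.
Proof.
apply: msize_leP => m; rewrite mcoeff_msupp mcoeff_deriv => hm.
have : (m + U_(i))%MM \in msupp p.
  by rewrite mcoeff_msupp; apply: contraNneq hm => ->; rewrite mul0rn.
move/msize_mdeg_lt; rewrite mdegD mdeg1; lia.
Qed.

Lemma msize_dderiv d p : (msize (dderiv d p) <= (msize p).-1)%N.
Proof.
rewrite /dderiv (leq_trans (msize_sum _ _ _)) //.
apply/bigmax_leqP => i _.
exact: leq_trans (msizeZ_le _ _) (msize_mderiv _ _).
Qed.

Definition flat (x : vec R) r p := forall m, (mdeg m < r)%N -> (p^`M[m]).@[x] = 0.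

Lemma flatD x r p q : flat x r p -> flat x r q -> flat x r (p + q).
Proof. by move=> hp hq m hm; rewrite mderivmD mevalD hp ?hq ?addr0. Qed.
Lemma flatZ x r c p : flat x r p -> flat x r (c *: p).
Proof. by move=> hp m hm; rewrite mderivmZ mevalZ hp ?mulr0. Qed.
Lemma flatN x r p : flat x r p -> flat x r (- p).
Proof. by move=> hp; rewrite -scaleN1r; apply: flatZ. Qed.
Lemma flatB x r p q : flat x r p -> flat x r q -> flat x r (p - q).
Proof. by move=> hp hq; apply: flatD => //; apply: flatN. Qed.
Lemma flat0 x r : flat x r 0.
Proof. by move=> m _; rewrite raddf0 meval0. Qed.
Lemma flat_sum x r (I : Type) (s : seq I) (P : pred I) (F : I -> {mpoly R[3]}) :
  (forall i, P i -> flat x r (F i)) -> flat x r (\sum_(i <- s | P i) F i).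
Proof.
move=> H; apply: (big_ind (flat x r)) => //; first exact: flat0.
exact: flatD.
Qed.

Lemma flat_mderiv x r p i : flat x r.+1 p -> flat x r (p^`M(i)).
Proof.
move=> hp m hm; rewrite -mderivmU1m -mderivmDm; apply: hp.
by rewrite mdegD mdeg1.
Qed.

Lemma flat_dderiv x r d p : flat x r.+1 p -> flat x r (dderiv d p).
Proof.
move=> hp; apply: flat_sum => i _; apply: flatZ; exact: flat_mderiv.
Qed.

Lemma flat_eval x r p : flat x r.+1 p -> p.@[x] = 0.
Proof. by move=> hp; rewrite -(mderivm0m p) hp // mdeg0. Qed.

Lemma flat_iter x r d p n : flat x r p -> (n < r)%N -> (iter n (dderiv d) p).@[x] = 0.
Proof.
elim: n r p => [|n IH] r p hp hn.
  by case: r hp hn => // r hp _; apply: flat_eval hp.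
rewrite iterSr; case: r hp hn => // r hp hn.
by apply: (IH r) => //; apply: flat_dderiv.
Qed.

Lemma edge_bubble a b r p : flat a r p -> flat b r p ->
  restrict a b p = bubble r (qfac r (restrict a b p)) /\
  (size (qfac r (restrict a b p)) <= msize p - r.*2)%N.
Proof.
move=> ha hb.
have H : forall m, (m < r)%N -> ((restrict a b p)^`(m)).[0] = 0 /\ ((restrict a b p)^`(m)).[1] = 0.
  move=> m hm; rewrite derivn_restrict !horner_restrict; split.
    rewrite (@meval_eq _ _ _ a); first exact: (flat_iter _ ha hm).
    by move=> i /=; rewrite mul0r addr0.
  rewrite (@meval_eq _ _ _ b); first exact: (flat_iter _ hb hm).
  by move=> i /=; rewrite mul1r addrC subrK.
have [h1 h2] := bubble_fac H.
split=> //; apply: leq_trans h2 _; apply: leq_sub2r; exact: size_restrict.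
Qed.

End Multi.
Section Geo.
Variable R : rcfType.

Lemma eip_sq_ge0 (a b : vec R) f : 0 <= eip a b f f.
Proof. by rewrite /eip mulr_ge0 ?int01_sq_ge0 // /elen /vnorm sqrtr_ge0. Qed.

Lemma eip_sq_eq0 (a b : vec R) f : elen a b != 0 -> eip a b f f = 0 -> f = 0.
Proof.
move=> hL /eqP; rewrite /eip mulf_eq0 (negbTE hL) /= => /eqP.
exact: int01_sq_eq0.
Qed.

Lemma dot_sym (u w : vec R) : dot u w = dot w u.
Proof. by rewrite /dot; apply: eq_bigr => i _; rewrite mulrC. Qed.

Lemma dot_self_eq0 (u : vec R) : dot u u = 0 -> forall i, u i = 0.
Proof.
move=> H i.
have hp : forall j : 'I_3, predT j -> 0 <= u j * u j by move=> j _; rewrite -expr2 sqr_ge0.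
have := @psumr_eq0P R _ predT (fun i => u i * u i) hp H i isT.
by move/eqP; rewrite mulf_eq0 orbb => /eqP.
Qed.

Lemma elen_neq0 (a b : vec R) : (exists i, a i != b i) -> elen a b != 0.
Proof.
case=> i hi; rewrite /elen /vnorm; apply/eqP => /eqP.
rewrite sqrtr_eq0 => hle.
have h0 : dot (fun i => b i - a i) (fun i => b i - a i) = 0.
  apply/eqP; rewrite eq_le hle /=.
  by rewrite /dot sumr_ge0 // => j _; rewrite -expr2 sqr_ge0.
by move: (dot_self_eq0 h0 i) => /eqP; rewrite subr_eq0 eq_sym (negbTE hi).
Qed.

Lemma tang_unit (a b : vec R) : elen a b != 0 -> dot (tang a b) (tang a b) = 1.
Proof.
move=> hL; rewrite /dot /tang.
have -> : \sum_(i < 3) (b i - a i) / elen a b * ((b i - a i) / elen a b)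
  = (dot (fun i => b i - a i) (fun i => b i - a i)) / (elen a b)^+2.
  rewrite /dot mulr_suml; apply: eq_bigr => i _.
  by rewrite expr2 invfM !mulrA; congr (_ * _); rewrite mulrAC.
rewrite /elen /vnorm sqr_sqrtr ?divff //.
  by move: hL; rewrite /elen /vnorm sqrtr_eq0 -ltNge => /lt0r_neq0.
by rewrite /dot sumr_ge0 // => j _; rewrite -expr2 sqr_ge0.
Qed.

Lemma frame_complete (E : 'I_3 -> vec R) :
  (forall p q, dot (E p) (E q) = (p == q)%:R) ->
  forall c d, \sum_(p < 3) E p c * E p d = (c == d)%:R.
Proof.
move=> H c d.
pose M : 'M[R]_3 := \matrix_(p, c) E p c.
have h1 : M *m M^T = 1%:M.
  apply/matrixP => p q; rewrite !mxE -H /dot; apply: eq_bigr => i _.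
  by rewrite !mxE.
have := mulmx1C h1 => /matrixP /(_ c d); rewrite !mxE => <-.
by apply: eq_bigr => i _; rewrite !mxE.
Qed.

Lemma frame_expand (V : lmodType R) (E : 'I_3 -> vec R) :
  (forall p q, dot (E p) (E q) = (p == q)%:R) ->
  forall (G : 'I_3 -> V) c, \sum_(p < 3) E p c *: (\sum_(i < 3) E p i *: G i) = G c.
Proof.
move=> H G c.
under eq_bigr do rewrite scaler_sumr.
rewrite exchange_big /=.
under eq_bigr do (under eq_bigr do rewrite scalerA; rewrite -scaler_suml frame_complete //).
rewrite (bigD1 c) //= eqxx scale1r big1 ?addr0 // => i hi.
by rewrite eq_sym (negbTE hi) scale0r.
Qed.

Lemma nondeg_neq (v : 'I_4 -> vec R) (i j : 'I_4) :
  nondeg_tet v -> (i < j)%N -> exists c, v i c != v j c.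
Proof.
move=> hnd hij; case: (boolP [exists c, v i c != v j c]) => [/existsP //|].
rewrite negb_exists => /forallP hall; have heq : forall c, v i c = v j c.
  by move=> c; have := hall c; rewrite negbK => /eqP.
exfalso.
move: hnd; rewrite /nondeg_tet; apply/negP; rewrite negbK.
case: (unliftP ord0 j) => [j' hj|hj]; last by rewrite hj in hij.
case: (unliftP ord0 i) => [i' hi|hi].
  apply/eqP; apply: (determinant_alternate (i1 := i') (i2 := j')).
    by apply: contraTneq hij => hh; rewrite hi hj hh ltnn.
  by move=> c; rewrite !mxE -hi -hj heq.
apply/eqP; rewrite (expand_det_row _ j') big1 // => c _.
by rewrite mxE -hj -heq hi subrr mul0r.
Qed.

End Geo.
Section Help.
Variable R : rcfType.
Implicit Types (a b : vec R).

Lemma rho_frame a b (E : 'I_3 -> vec R) :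
  (forall p q, dot (E p) (E q) = (p == q)%:R) ->
  forall G : 'I_3 -> {mpoly R[3]},
  (forall p, restrict a b (\sum_(i < 3) E p i *: G i) = 0) ->
  forall c, restrict a b (G c) = 0.
Proof.
move=> hE G H c; rewrite -(frame_expand hE G c) restrict_sum big1 // => p _.
by rewrite restrictZ H scaler0.
Qed.

Lemma rho_comb a b (w : vec R) (G : 'I_3 -> {mpoly R[3]}) :
  (forall c, restrict a b (G c) = 0) -> restrict a b (\sum_(i < 3) w i *: G i) = 0.
Proof. by move=> H; rewrite restrict_sum big1 // => i _; rewrite restrictZ H scaler0. Qed.

Lemma dderiv_ext (d d' : vec R) (p : {mpoly R[3]}) : d =1 d' -> dderiv d p = dderiv d' p.
Proof. by move=> h; rewrite /dderiv; apply: eq_bigr => i _; rewrite h. Qed.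

Lemma rho_dt a b (q : {mpoly R[3]}) : elen a b != 0 -> restrict a b q = 0 ->
  restrict a b (dderiv (tang a b) q) = 0.
Proof.
move=> hL h0.
have e : dderiv (fun i => b i - a i) q = elen a b *: dderiv (tang a b) q.
  rewrite /dderiv scaler_sumr; apply: eq_bigr => i _; rewrite scalerA /tang.
  by rewrite mulrC divfK.
have := deriv_restrict a b q; rewrite h0 deriv0 e restrictZ => /esym/eqP.
by rewrite scaler_eq0 (negbTE hL) /= => /eqP.
Qed.

Lemma sum3_sq a b (f : 'I_3 -> {poly R}) : elen a b != 0 ->
  \sum_(c < 3) eip a b (f c) (f c) = 0 -> forall c, f c = 0.
Proof.
move=> hL H c; apply: (eip_sq_eq0 hL).
have hp : forall j : 'I_3, predT j -> 0 <= eip a b (f j) (f j) by move=> j _; exact: eip_sq_ge0.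
exact: (@psumr_eq0P R _ predT _ hp H c isT).
Qed.

Lemma deriv0_bubble (f : {poly R}) r q : (0 < r)%N -> f = bubble r q -> f^`() = 0 -> f = 0.
Proof.
move=> hr hf hd.
have hs : (size f <= 1)%N by move: (polyorder.size_deriv f); rewrite hd size_poly0; case: (size f) => [|[|?]].
rewrite (size1_polyC hs); have := bubble0 q hr; rewrite -hf.
by rewrite (size1_polyC hs) hornerC => ->; rewrite polyC0 coef0.
Qed.

Lemma flat_dotp x r (w : vec R) (F : vfield R) : (forall c, flat x r (F c)) -> flat x r (dotp w F).
Proof. by move=> H; apply: flat_sum => i _; apply: flatZ. Qed.

Lemma flat_curl x r (F : vfield R) : (forall c, flat x r.+1 (F c)) -> forall c, flat x r (curl F c).
Proof.
move=> H c; rewrite /curl; case: (nat_of_ord c) => [|[|?]];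
  by apply: flatB; apply: flat_mderiv.
Qed.

Lemma msz_dotp K (w : vec R) (F : vfield R) : (forall c, msize (F c) <= K)%N -> (msize (dotp w F) <= K)%N.
Proof.
move=> H; rewrite /dotp (leq_trans (msize_sum _ _ _)) //.
by apply/bigmax_leqP => i _; exact: leq_trans (msizeZ_le _ _) (H i).
Qed.

Lemma msz_curl K (F : vfield R) : (forall c, msize (F c) <= K)%N -> forall c, (msize (curl F c) <= K.-1)%N.
Proof.
move=> H c.
have hd : forall i j, (msize ((F i)^`M(j)) <= K.-1)%N.
  by move=> i j; apply: leq_trans (msize_mderiv _ _) _; rewrite -!subn1 leq_sub2r.
rewrite /curl; case: (nat_of_ord c) => [|[|?]];
  by rewrite (leq_trans (msizeD_le _ _)) // geq_max hd msizeN hd.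
Qed.

Lemma msz_dderiv K (d : vec R) (p : {mpoly R[3]}) : (msize p <= K)%N -> (msize (dderiv d p) <= K.-1)%N.
Proof. by move=> h; apply: leq_trans (msize_dderiv _ _) _; rewrite -!subn1 leq_sub2r. Qed.

Lemma div_curl (F : vfield R) : \sum_(c < 3) (curl F c)^`M(c) = 0.
Proof.
rewrite !big_ord_recl big_ord0 /curl /=.
have e0 : ord0 = i0 by apply/val_inj.
have e1 : lift ord0 ord0 = i1 :> 'I_3 by apply/val_inj.
have e2 : lift ord0 (lift ord0 ord0) = i2 :> 'I_3 by apply/val_inj.
rewrite !mderivB e2 e1 e0 (mderiv_comm i0 i1 (F i2)) (mderiv_comm i0 i2 (F i1)) (mderiv_comm i1 i2 (F i0)).
set A := (_ ^`M(_))^`M(_); set B := (_ ^`M(_))^`M(_); set C := (_ ^`M(_))^`M(_).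
by ring.
Qed.

End Help.
Section Edge.
Variable R : rcfType.

Definition frameE (t : vec R) (n : 'I_2 -> vec R) (p : 'I_3) : vec R :=
  match nat_of_ord p with 0 => t | 1 => n ord0 | _ => n ord_max end.

Lemma frameE_on (a b : vec R) (n : 'I_2 -> vec R) : elen a b != 0 ->
  (forall l l', dot (n l) (n l') = (l == l')%:R) ->
  (forall l, dot (n l) (tang a b) = 0) ->
  forall p q, dot (frameE (tang a b) n p) (frameE (tang a b) n q) = (p == q)%:R.
Proof.
move=> hL h1 h2.
have h3 l : dot (tang a b) (n l) = 0 by rewrite dot_sym h2.
by case=> [[|[|[|?]]] hp] [[|[|[|?]]] hq] //=; rewrite /frameE /= ?tang_unit ?h1 ?h2 ?h3.
Qed.


Lemma edge_main (k : nat) (a b : vec R) (n : 'I_2 -> vec R) (xi : vfield R) :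
  (9 <= k)%N -> elen a b != 0 ->
  (forall c, (msize (xi c) <= k)%N) ->
  (forall l l', dot (n l) (n l') = (l == l')%:R) ->
  (forall l, dot (n l) (tang a b) = 0) ->
  (forall c, flat a 4 (xi c)) -> (forall c, flat b 4 (xi c)) ->
  let t := tang a b in
  eip a b (restrict a b (dotp t xi)) 1 = 0 ->
  (forall q : {poly R}, (size q <= k - 8)%N ->
     eip a b (bubble 4 q) 1 = 0 ->
     eip a b (restrict a b (dotp t xi)) (bubble 4 q) = 0) ->
  (forall (jj : 'I_2) (q : {poly R}), (size q <= k - 8)%N ->
     etip a b (restrict a b (dotp (n jj) xi)) (bubble 4 q) = 0) ->
  (forall (jj : 'I_2) (q : {poly R}), (size q <= k - 7)%N ->
     eip a b (restrict a b (dderiv (n jj) (dotp t xi))) (bubble 3 q) = 0) ->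
  (forall (jj jj' : 'I_2) (q : {poly R}), (size q <= k - 7)%N ->
     eip a b (restrict a b (dderiv (n jj) (dotp (n jj') xi))) (bubble 3 q) = 0) ->
  (forall Q : 'I_3 -> {poly R}, (forall c, (size (Q c) <= k - 6)%N) ->
     \sum_(c < 3) eip a b (restrict a b (dderiv (n ord0) (curl xi c)))
                          (bubble 2 (Q c)) = 0) ->
  (forall Q : 'I_3 -> {poly R}, (forall c, (size (Q c) <= k - 6)%N) ->
     let w := fun c => dderiv (n ord_max) (curl xi c) in
     \sum_(c < 3) eip a b
         (restrict a b (w c - n ord_max c *: dotp (n ord_max) w))
         (bubble 2 (Q c)) = 0) ->
  (forall c, restrict a b (xi c) = 0) /\
  (forall c d, restrict a b ((xi c)^`M(d)) = 0) /\
  (forall c d, restrict a b ((curl xi c)^`M(d)) = 0).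
Proof.
move=> hk hL hsz hn1 hn2 fa fb t hmom h1a h1b h1c h1d h1e h1f.
pose E := frameE t n.
have hEo : forall p q, dot (E p) (E q) = (p == q)%:R by exact: frameE_on.

have hA : (restrict a b) (dotp t xi) = 0.
  have [h1 h2] := edge_bubble (flat_dotp t fa) (flat_dotp t fb).
  have hq : (size (qfac 4 ((restrict a b) (dotp t xi))) <= k - 8)%N.
    by apply: leq_trans h2 _; have := msz_dotp t hsz; lia.
  have := h1a _ hq; rewrite -h1 => /(_ hmom).
  exact: eip_sq_eq0.
have hB : forall l, (restrict a b) (dotp (n l) xi) = 0.
  move=> l.
  have [h1 h2] := edge_bubble (flat_dotp (n l) fa) (flat_dotp (n l) fb).
  have hq : (size (qfac 4 ((restrict a b) (dotp (n l) xi))) <= k - 8)%N.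
    by apply: leq_trans h2 _; have := msz_dotp (n l) hsz; lia.
  have := h1b l _ hq; rewrite -h1 /etip => /(eip_sq_eq0 hL) /eqP.
  rewrite scaler_eq0 invr_eq0 (negbTE hL) /= => /eqP hd.
  exact: (deriv0_bubble _ h1 hd).
have hC : forall c, (restrict a b) (xi c) = 0.
  apply: (rho_frame hEo) => p.
  by case: p => [[|[|[|?]]] hp] //=; rewrite /E /frameE /=; first [exact: hA | exact: (hB ord0) | exact: (hB ord_max)].
have hCw : forall w, (restrict a b) (dotp w xi) = 0 by move=> w; exact: rho_comb.
have step3 : forall pp : {mpoly R[3]}, flat a 3 pp -> flat b 3 pp ->
    (msize pp <= k.-1)%N ->
    (forall q : {poly R}, (size q <= k - 7)%N -> eip a b ((restrict a b) pp) (bubble 3 q) = 0) -> (restrict a b) pp = 0.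
  move=> pp ha hb hs H; have [h1 h2] := edge_bubble ha hb.
  have hq : (size (qfac 3 ((restrict a b) pp)) <= k - 7)%N by apply: leq_trans h2 _; lia.
  by have := H _ hq; rewrite -h1; exact: eip_sq_eq0.
have hE2 : forall p q, (restrict a b) (dderiv (E p) (dotp (E q) xi)) = 0.
  have hN : forall l q, (restrict a b) (dderiv (n l) (dotp (E q) xi)) = 0.
    move=> l q; apply: step3.
    - by apply: flat_dderiv; apply: flat_dotp.
    - by apply: flat_dderiv; apply: flat_dotp.
    - by apply: msz_dderiv; apply: msz_dotp.
    - by case: q => [[|[|[|?]]] hq] //=; rewrite /E /frameE /=; first [exact: h1c | exact: h1d].
  move=> p q; case: p => [[|[|[|?]]] hp] //=; rewrite /E /frameE /=.
  - exact: (rho_dt hL (hCw _)).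
  - exact: hN.
  - exact: hN.
have mexp : forall (pp : {mpoly R[3]}) d, pp^`M(d) = \sum_(p < 3) E p d *: dderiv (E p) pp.
  by move=> pp d; exact: (esym (frame_expand hEo (fun i => pp^`M(i)) d)).
have xexp : forall c, xi c = \sum_(p < 3) E p c *: dotp (E p) xi.
  by move=> c; exact: (esym (frame_expand hEo xi c)).
have hF : forall c d, (restrict a b) ((xi c)^`M(d)) = 0.
  move=> c d; rewrite mexp; apply: rho_comb => p.
  rewrite xexp dderiv_sum restrict_sum big1 // => q _.
  by rewrite dderivZ restrictZ hE2 scaler0.
have hG : forall c, (restrict a b) (curl xi c) = 0.
  by move=> c; rewrite /curl; case: (nat_of_ord c) => [|[|?]]; rewrite restrictB !hF subrr.
have hH : forall c, (restrict a b) (dderiv t (curl xi c)) = 0 by move=> c; exact: rho_dt hL (hG c).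
have step2 : forall F : 'I_3 -> {mpoly R[3]}, (forall c, flat a 2 (F c)) ->
    (forall c, flat b 2 (F c)) -> (forall c, msize (F c) <= k.-2)%N ->
    (forall Q : 'I_3 -> {poly R}, (forall c, (size (Q c) <= k - 6)%N) ->
       \sum_(c < 3) eip a b (restrict a b (F c)) (bubble 2 (Q c)) = 0) ->
    forall c, restrict a b (F c) = 0.
  move=> F ha hb hs H.
  pose Q c := qfac 2 (restrict a b (F c)).
  have hQ : forall c, (size (Q c) <= k - 6)%N.
    move=> c; have [_ h2] := edge_bubble (ha c) (hb c).
    by apply: leq_trans h2 _; have := hs c; lia.
  apply: (sum3_sq hL); rewrite -[RHS](H Q hQ); apply: eq_bigr => c _.
  by have [h1 _] := edge_bubble (ha c) (hb c); rewrite /Q -h1.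
have fcu : forall x, (forall c, flat x 4 (xi c)) -> forall l c, flat x 2 (dderiv (n l) (curl xi c)).
  by move=> x hx l c; apply: flat_dderiv; apply: flat_curl.
have scu : forall l c, (msize (dderiv (n l) (curl xi c)) <= k.-2)%N.
  by move=> l c; apply: msz_dderiv; apply: msz_curl.
have hI : forall c, restrict a b (dderiv (n ord0) (curl xi c)) = 0.
  by apply: step2 => //; [exact: fcu | exact: fcu].
pose w := fun c => dderiv (n ord_max) (curl xi c).
have hJ : restrict a b (dotp (n ord_max) w) = 0.
  have <- : restrict a b (\sum_(c < 3) (curl xi c)^`M(c)) = restrict a b (dotp (n ord_max) w).
    rewrite restrict_sum /dotp restrict_sum; apply: eq_bigr => c _.
    rewrite mexp restrict_sum !big_ord_recl big_ord0 /= !restrictZ.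
    rewrite /E /frameE /= hH hI !scaler0 !add0r addr0.
    by [].
  by have := div_curl xi; move=> ->; rewrite restrict0.
have hK : forall c, restrict a b (w c - n ord_max c *: dotp (n ord_max) w) = 0.
  apply: step2 => //.
  - move=> c; apply: flatB; first exact: fcu.
    by apply: flatZ; apply: flat_dotp => c'; exact: fcu.
  - move=> c; apply: flatB; first exact: fcu.
    by apply: flatZ; apply: flat_dotp => c'; exact: fcu.
  - move=> c; rewrite (leq_trans (msizeD_le _ _)) // geq_max scu msizeN.
    by rewrite (leq_trans (msizeZ_le _ _)) //; apply: msz_dotp => c'; exact: scu.
have hW : forall c, restrict a b (w c) = 0.
  by move=> c; have := hK c; rewrite restrictB restrictZ hJ scaler0 subr0.
split=> //; split=> // c d.
rewrite mexp; apply: rho_comb => p.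
by case: p => [[|[|[|?]]] hp] //=; rewrite /E /frameE /=; first [exact: hH | exact: hI | exact: hW].
Qed.

End Edge.

Unset Implicit Arguments.

Theorem lemmaB1 (R : rcfType) (k : nat) (v : 'I_4 -> vec R)
    (N : 'I_4 -> 'I_4 -> 'I_2 -> vec R) (xi : vfield R) :
  (9 <= k)%N ->
  nondeg_tet v ->
  (* xi in [P_{k-1}(K)]^3 *)
  (forall c, (msize (xi c) <= k)%N) ->
  (* N i j 0, N i j 1 : orthonormal unit normals of the edge [v i, v j] *)
  (forall i j : 'I_4, (i < j)%N ->
     (forall l l' : 'I_2, dot (N i j l) (N i j l') = (l == l')%:R) /\
     (forall l : 'I_2, dot (N i j l) (tang (v i) (v j)) = 0)) ->
  (* vertex functionals: D^alpha xi (x) = 0, |alpha| <= 3 *)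
  (forall (l : 'I_4) (m : 'X_{1..3}) (c : 'I_3), (mdeg m <= 3)%N ->
     ((xi c)^`M[m]).@[v l] = 0) ->
  (* edge functionals, on each edge e = [v i, v j] *)
  (forall i j : 'I_4, (i < j)%N ->
     let a := v i in let b := v j in
     let t := tang a b in
     let n := N i j in
     (* edge moment (xi.t, 1)_e *)
     eip a b (restrict a b (dotp t xi)) 1 = 0 /\
     (* (1.a) *)
     (forall q : {poly R}, (size q <= k - 8)%N ->
        eip a b (bubble 4 q) 1 = 0 ->
        eip a b (restrict a b (dotp t xi)) (bubble 4 q) = 0) /\
     (* (1.b) *)
     (forall (jj : 'I_2) (q : {poly R}), (size q <= k - 8)%N ->
        etip a b (restrict a b (dotp (n jj) xi)) (bubble 4 q) = 0) /\
     (* (1.c) *)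
     (forall (jj : 'I_2) (q : {poly R}), (size q <= k - 7)%N ->
        eip a b (restrict a b (dderiv (n jj) (dotp t xi))) (bubble 3 q) = 0) /\
     (* (1.d) *)
     (forall (jj jj' : 'I_2) (q : {poly R}), (size q <= k - 7)%N ->
        eip a b (restrict a b (dderiv (n jj) (dotp (n jj') xi))) (bubble 3 q)
          = 0) /\
     (* (1.e) *)
     (forall Q : 'I_3 -> {poly R}, (forall c, (size (Q c) <= k - 6)%N) ->
        \sum_(c < 3) eip a b (restrict a b (dderiv (n ord0) (curl xi c)))
                             (bubble 2 (Q c)) = 0) /\
     (* (1.f) *)
     (forall Q : 'I_3 -> {poly R}, (forall c, (size (Q c) <= k - 6)%N) ->
        let w := fun c => dderiv (n ord_max) (curl xi c) in
        \sum_(c < 3) eip a b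
            (restrict a b (w c - n ord_max c *: dotp (n ord_max) w))
            (bubble 2 (Q c)) = 0)) ->
  (* conclusion: xi, grad xi, grad curl xi vanish on every edge *)
  forall i j : 'I_4, (i < j)%N ->
  forall s : R, 0 <= s <= 1 ->
  let x : vec R := fun c => v i c + s * (v j c - v i c) in
  (forall c, (xi c).@[x] = 0) /\
  (forall c d, ((xi c)^`M(d)).@[x] = 0) /\
  (forall c d, ((curl xi c)^`M(d)).@[x] = 0).
Proof.
move=> hk hnd hsz hON hv hE i j hij s hs x.
have [hn1 hn2] := hON i j hij.
have hL : elen (v i) (v j) != 0 by apply: elen_neq0; exact: nondeg_neq.
have fl : forall l c, flat (v l) 4 (xi c) by move=> l c m hm; apply: hv.
have := hE i j hij; cbv zeta; case=> h0 [h1 [h2 [h3 [h4 [h5 h6]]]]].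
have [hx [hgx hgc]] := edge_main hk hL hsz hn1 hn2 (fl i) (fl j) h0 h1 h2 h3 h4 h5 h6.
have hr : forall p, p.@[x] = (restrict (v i) (v j) p).[s] by move=> p; rewrite horner_restrict.
split; first by move=> c; rewrite hr hx horner0.
by split=> c d; rewrite hr ?hgx ?hgc horner0.
Qed.
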